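(* Let $G$ be a group containing an element of infinite order, and suppose $G$ acts on a Smale space $(X,\varphi)$. Then the action of $G$ is not free.
   Context: A Smale space $(X,\varphi)$ is an infinite compact metric space $(X,d)$ with a homeomorphism $\varphi:X\to X$ for which there exist constants $\epsilon_X>0$, $0<\lambda_X<1$ and a map $[\cdot,\cdot]$ defined on pairs $(x,y)$ with $d(x,y)<\epsilon_X$ such that, whenever both sides are defined, $[x,x]=x$, $[x,[y,z]]=[x,z]$, $[[x,y],z]=[x,z]$, $\varphi([x,y])=[\varphi(x),\varphi(y)]$, and moreover $d(\varphi(x),\varphi(y))\le\lambda_X d(x,y)$ whenever $[x,y]=y$, and $d(\varphi^{-1}(x),\varphi^{-1}(y))\le\lambda_X d(x,y)$ whenever $[x,y]=x$. An action of a group $G$ on $(X,\varphi)$ is a (continuous) homomorphism $G\to\mathrm{Homeo}(X)$, $g\mapsto(x\mapsto gx)$, such that $g\varphi(x)=\varphi(gx)$ for all $x\in X$, $g\in G$. The action is free if for every $x\in X$, $gx=x$ implies $g=e$. *)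

(* Defs.v *)
From Stdlib Require Import Reals List.
Open Scope R_scope.

Definition is_metric {X : Type} (d : X -> X -> R) : Prop :=
  (forall x y, 0 <= d x y) /\
  (forall x y, d x y = 0 <-> x = y) /\
  (forall x y, d x y = d y x) /\
  (forall x y z, d x z <= d x y + d y z).

Definition metric_open {X : Type} (d : X -> X -> R) (U : X -> Prop) : Prop :=
  forall x, U x -> exists r, 0 < r /\ forall y, d x y < r -> U y.

Definition metric_compact {X : Type} (d : X -> X -> R) : Prop :=
  forall (I : Type) (U : I -> X -> Prop),
    (forall i, metric_open d (U i)) ->
    (forall x, exists i, U i x) ->
    exists l : list I, forall x, exists i, In i l /\ U i x.

Definition infinite_type (X : Type) : Prop :=
  forall l : list X, exists x, ~ In x l.

Definition metric_continuous {X : Type} (d : X -> X -> R) (f : X -> X) : Prop :=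
  forall x e, 0 < e -> exists del, 0 < del /\
    forall y, d x y < del -> d (f x) (f y) < e.

Definition is_homeomorphism {X : Type} (d : X -> X -> R) (f finv : X -> X) : Prop :=
  (forall x, finv (f x) = x) /\ (forall x, f (finv x) = x) /\
  metric_continuous d f /\ metric_continuous d finv.

(** Smale space (X, d, phi) with inverse phiinv, bracket br (only meaningful on
    pairs with d x y < eps), constants eps and lam.  Each axiom is required
    whenever all brackets involved are defined. *)
Definition is_smale_space {X : Type} (d : X -> X -> R) (phi phiinv : X -> X)
    (br : X -> X -> X) (eps lam : R) : Prop :=
  is_metric d /\ metric_compact d /\ infinite_type X /\
  is_homeomorphism d phi phiinv /\
  0 < eps /\ 0 < lam /\ lam < 1 /\
  (forall x y, d x y < eps -> forall e, 0 < e -> exists del, 0 < del /\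
     forall x' y', d x' y' < eps -> d x x' < del -> d y y' < del ->
       d (br x y) (br x' y') < e) /\
  (forall x, br x x = x) /\
  (forall x y z, d y z < eps -> d x (br y z) < eps -> d x z < eps ->
     br x (br y z) = br x z) /\
  (forall x y z, d x y < eps -> d (br x y) z < eps -> d x z < eps ->
     br (br x y) z = br x z) /\
  (forall x y, d x y < eps -> d (phi x) (phi y) < eps ->
     phi (br x y) = br (phi x) (phi y)) /\
  (forall x y, d x y < eps -> br x y = y ->
     d (phi x) (phi y) <= lam * d x y) /\
  (forall x y, d x y < eps -> br x y = x ->
     d (phiinv x) (phiinv y) <= lam * d x y).

Definition is_group {G : Type} (mul : G -> G -> G) (inv : G -> G) (e : G) : Prop :=
  (forall a b c, mul a (mul b c) = mul (mul a b) c) /\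
  (forall a, mul e a = a) /\ (forall a, mul a e = a) /\
  (forall a, mul (inv a) a = e) /\ (forall a, mul a (inv a) = e).

Fixpoint gpow {G : Type} (mul : G -> G -> G) (e : G) (g : G) (n : nat) : G :=
  match n with
  | O => e
  | S k => mul g (gpow mul e g k)
  end.

Definition infinite_order {G : Type} (mul : G -> G -> G) (e : G) (g : G) : Prop :=
  forall n : nat, (0 < n)%nat -> gpow mul e g n <> e.

Definition is_smale_action {G X : Type} (mul : G -> G -> G) (e : G)
    (d : X -> X -> R) (phi : X -> X) (act : G -> X -> X) : Prop :=
  (forall g, metric_continuous d (act g)) /\
  (forall x, act e x = x) /\
  (forall g h x, act (mul g h) x = act g (act h x)) /\
  (forall g x, act g (phi x) = phi (act g x)).

Definition free_action {G X : Type} (e : G) (act : G -> X -> X) : Prop :=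
  forall x g, act g x = x -> g = e.

(* Main.v *)
Require Import Defs.
From Stdlib Require Import Reals List Lia Lra Arith Classical ClassicalEpsilon.
Open Scope R_scope.

Lemma list_min_pos {X : Type} (w : X -> R) (l : list X) :
  (forall x, 0 < w x) -> exists del, 0 < del /\ forall c, In c l -> del <= w c.
Proof.
  intros Hw; induction l as [|a l IH].
  - exists 1; split; [lra|]; intros c [].
  - destruct IH as [del [Hd H]]. exists (Rmin del (w a)); split.
    + apply Rmin_glb_lt; auto.
    + intros c [<-|Hc]. apply Rmin_r. eapply Rle_trans; [apply Rmin_l|auto].
Qed.

Lemma cover_lemma {X : Type} (d : X -> X -> R) (r w : X -> R) :
  is_metric d -> metric_compact d -> (forall x, 0 < r x) -> (forall x, 0 < w x) ->
  exists del, 0 < del /\ forall y, exists c, d c y < r c / 2 /\ del <= r c / 2 /\ del <= w c.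
Proof.
  intros [Hpos [Hzero [Hsym Htri]]] Hc Hr Hw.
  destruct (Hc X (fun c y => d c y < r c / 2)) as [l Hl].
  - intros c y Hy. exists (r c / 2 - d c y); split; [lra|].
    intros y' Hy'. specialize (Htri c y y'). lra.
  - intros x. exists x. assert (d x x = 0) by (apply Hzero; auto). specialize (Hr x). lra.
  - destruct (list_min_pos (fun c => Rmin (r c / 2) (w c)) l) as [del [Hd Hm]].
    { intros x. apply Rmin_glb_lt; [specialize (Hr x); lra | auto]. }
    exists del; split; auto. intros y. destruct (Hl y) as [c [Hin Hc']].
    exists c. specialize (Hm c Hin). split; auto.
    split; eapply Rle_trans; eauto; [apply Rmin_l|apply Rmin_r].
Qed.

Lemma zero_lemma {X : Type} (d : X -> X -> R) (F : X -> R) :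
  is_metric d -> metric_compact d -> (forall x, 0 <= F x) ->
  (forall x, 0 < F x -> exists del, 0 < del /\ forall y, d x y < del -> F x / 2 < F y) ->
  (forall e, 0 < e -> exists x, F x < e) -> exists x, F x = 0.
Proof.
  intros Hm Hc HF Hcont Happ. apply NNPP; intro Hno.
  assert (Hp : forall x, 0 < F x).
  { intros x. destruct (HF x); auto. exfalso; apply Hno; eauto. }
  assert (Hd : forall x, {del | 0 < del /\ forall y, d x y < del -> F x / 2 < F y}).
  { intros x. apply constructive_indefinite_description. apply Hcont; auto. }
  destruct (cover_lemma d (fun x => proj1_sig (Hd x)) (fun x => F x / 2) Hm Hc) as [del [Hdel H]].
  - intros x. destruct (proj2_sig (Hd x)); auto.
  - intros x. specialize (Hp x); lra.
  - destruct (Happ del Hdel) as [y Hy]. destruct (H y) as [c [H1 [H2 H3]]].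
    destruct (proj2_sig (Hd c)) as [H4 H5].
    assert (Hlt : d c y < proj1_sig (Hd c)) by lra.
    specialize (H5 y Hlt). lra.
Qed.

Lemma pigeon_nat {X : Type} (f : nat -> X) (l : list X) :
  (forall k, In (f k) l) -> exists i j, (i < j)%nat /\ f i = f j.
Proof.
  intros Hf. apply NNPP; intro Hno.
  assert (Hnd : NoDup (map f (seq 0 (S (length l))))).
  { apply NoDup_map_NoDup_ForallPairs; [|apply seq_NoDup].
    intros a b _ _ Hab. destruct (Nat.lt_trichotomy a b) as [h|[h|h]]; auto.
    - exfalso; apply Hno; eauto.
    - exfalso; apply Hno; eauto. }
  apply NoDup_incl_length with (l' := l) in Hnd.
  - rewrite length_map, length_seq in Hnd. lia.
  - intros x Hx. apply in_map_iff in Hx. destruct Hx as [k [<- _]]. auto.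
Qed.

Lemma pigeonhole {X : Type} (d : X -> X -> R) (U : X -> X -> Prop) (s : nat -> X) :
  metric_compact d -> (forall c, metric_open d (U c)) -> (forall c, U c c) ->
  exists i j c, (i < j)%nat /\ U c (s i) /\ U c (s j).
Proof.
  intros Hc Ho Hself. destruct (Hc X U Ho (fun x => ex_intro _ x (Hself x))) as [l Hl].
  assert (Hch : forall k, {c | In c l /\ U c (s k)}).
  { intros k. apply constructive_indefinite_description. apply Hl. }
  destruct (pigeon_nat (fun k => proj1_sig (Hch k)) l) as [i [j [Hij He]]].
  - intros k. apply (proj2_sig (Hch k)).
  - exists i, j, (proj1_sig (Hch i)). split; auto. split. apply (proj2_sig (Hch i)).
    rewrite He. apply (proj2_sig (Hch j)).
Qed.

Lemma pow_decr (lam : R) (n m : nat) : 0 <= lam <= 1 -> (n <= m)%nat -> lam ^ m <= lam ^ n.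
Proof.
  intros Hl Hnm. replace m with (n + (m - n))%nat by lia. rewrite pow_add.
  rewrite <- (Rmult_1_r (lam ^ n)) at 2. apply Rmult_le_compat_l.
  apply pow_le; lra. induction (m - n)%nat as [|k IH]; simpl; [lra|]. replace 1 with (1*1) by lra. apply Rmult_le_compat; try lra. apply pow_le; lra.
Qed.

Lemma iter_cancel {X : Type} (f g : X -> X) : (forall x, f (g x) = x) ->
  forall i k x, (i <= k)%nat -> Nat.iter i f (Nat.iter k g x) = Nat.iter (k - i) g x.
Proof.
  intros Hfg i; induction i as [|i IH]; intros k x Hik.
  - simpl. now rewrite Nat.sub_0_r.
  - simpl. rewrite IH by lia. replace (k - i)%nat with (S (k - S i)) by lia. simpl. apply Hfg.
Qed.

Lemma iter_cont {X : Type} (d : X -> X -> R) (f : X -> X) : metric_continuous d f ->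
  forall n, metric_continuous d (Nat.iter n f).
Proof.
  intros Hf n; induction n as [|n IH]; intros x e He.
  - exists e; split; auto.
  - simpl. destruct (Hf (Nat.iter n f x) e He) as [d1 [Hd1 H1]].
    destruct (IH x d1 Hd1) as [d2 [Hd2 H2]]. exists d2; split; auto.
Qed.


Lemma smale_unpack {X : Type} (d : X -> X -> R) phi phiinv br eps lam :
  is_smale_space d phi phiinv br eps lam ->
  is_metric d /\ metric_compact d /\ infinite_type X /\ is_homeomorphism d phi phiinv /\
  0 < eps /\ 0 < lam /\ lam < 1.
Proof. intros H; repeat destruct H as [? H]; tauto. Qed.

Ltac unpack H := destruct H as (Hm & Hcpt & Hinf & (Hpsi & Hphipsi & Hcphi & Hcpsi) & Heps & Hl0 & Hl1 & Hbrc & Hbrxx & Hax1 & Hax2 & Heqv & Hst & Hun);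
  destruct Hm as (Hdpos & Hdz & Hdsym & Htri).

Lemma stab_pow {X : Type} (d : X -> X -> R) phi phiinv br eps lam :
  is_smale_space d phi phiinv br eps lam ->
  forall t a z, br a z = z -> d a z < eps ->
  br (Nat.iter t phi a) (Nat.iter t phi z) = Nat.iter t phi z /\
  d (Nat.iter t phi a) (Nat.iter t phi z) <= lam ^ t * d a z.
Proof.
  intros H. pose proof H as H0. unpack H. intros t; induction t as [|t IH]; intros a z Haz Hd.
  - simpl; split; auto; lra.
  - destruct (IH a z Haz Hd) as [H1 H2]. simpl.
    assert (Hlt : d (Nat.iter t phi a) (Nat.iter t phi z) < eps).
    { assert (lam ^ t <= 1) by (apply (pow_decr lam 0 t); [lra|lia]).
      assert (0 <= lam ^ t) by (apply pow_le; lra).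
      apply Rle_lt_trans with (lam ^ t * d a z); auto.
      apply Rle_lt_trans with (1 * d a z). apply Rmult_le_compat_r; auto. lra. }
    assert (H3 := Hst _ _ Hlt H1).
    assert (Hlt2 : d (phi (Nat.iter t phi a)) (phi (Nat.iter t phi z)) < eps).
    { assert (0 <= lam * d (Nat.iter t phi a) (Nat.iter t phi z)) by (apply Rmult_le_pos; [lra|apply Hdpos]).
      assert (lam * d (Nat.iter t phi a) (Nat.iter t phi z) < eps).
      { apply Rle_lt_trans with (1 * d (Nat.iter t phi a) (Nat.iter t phi z)).
        apply Rmult_le_compat_r; [apply Hdpos|lra]. lra. }
      lra. }
    split.
    + rewrite <- Heqv by auto. now rewrite H1.
    + apply Rle_trans with (lam * d (Nat.iter t phi a) (Nat.iter t phi z)); auto.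
      rewrite Rmult_assoc. apply Rmult_le_compat_l; lra.
Qed.

Lemma pow_bound (lam x D eps : R) (t : nat) : 0 < lam < 1 -> 0 <= D ->
  x <= lam ^ t * D -> D < eps -> x < eps.
Proof.
  intros Hl HD Hx HDe.
  assert (lam ^ t <= 1) by (apply (pow_decr lam 0 t); [lra|lia]).
  assert (0 <= lam ^ t) by (apply pow_le; lra).
  apply Rle_lt_trans with (lam ^ t * D); auto.
  apply Rle_lt_trans with (1 * D). apply Rmult_le_compat_r; auto. lra.
Qed.

Lemma unst_pow {X : Type} (d : X -> X -> R) phi phiinv br eps lam :
  is_smale_space d phi phiinv br eps lam ->
  forall t z b, br z b = z -> d z b < eps ->
  br (Nat.iter t phiinv z) (Nat.iter t phiinv b) = Nat.iter t phiinv z /\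
  d (Nat.iter t phiinv z) (Nat.iter t phiinv b) <= lam ^ t * d z b.
Proof.
  intros H. pose proof H as H0. unpack H. intros t; induction t as [|t IH]; intros z b Hzb Hd.
  - simpl; split; auto; lra.
  - destruct (IH z b Hzb Hd) as [H1 H2]. simpl.
    set (z' := Nat.iter t phiinv z) in *. set (b' := Nat.iter t phiinv b) in *.
    assert (Hlt : d z' b' < eps) by (apply (pow_bound lam _ (d z b) eps t); auto).
    assert (H3 := Hun _ _ Hlt H1).
    assert (Hlt2 : d (phiinv z') (phiinv b') < eps).
    { apply (pow_bound lam _ (d z' b') eps 1); auto. simpl; lra. }
    split.
    + assert (E : phi (br (phiinv z') (phiinv b')) = br z' b').
      { rewrite Heqv by (rewrite ?Hphipsi; auto). now rewrite !Hphipsi. }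
      rewrite <- (Hpsi (br (phiinv z') (phiinv b'))), E, H1. reflexivity.
    + apply Rle_trans with (lam * d z' b'); auto.
      rewrite Rmult_assoc. apply Rmult_le_compat_l; lra.
Qed.

Lemma unif_bracket {X : Type} (d : X -> X -> R) phi phiinv br eps lam :
  is_smale_space d phi phiinv br eps lam ->
  forall eta, 0 < eta -> exists gam, 0 < gam /\ gam <= eps /\
  forall a b, d a b < gam -> d a (br a b) < eta /\ d (br a b) b < eta.
Proof.
  intros H. pose proof H as H0. unpack H. intros eta Heta.
  assert (Hd : forall c, {del | 0 < del /\ forall x' y', d x' y' < eps -> d c x' < del -> d c y' < del ->
      d (br c c) (br x' y') < eta / 2}).
  { intros c. apply constructive_indefinite_description. apply Hbrc.
    assert (d c c = 0) by (apply Hdz; auto). lra. lra. }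
  destruct (cover_lemma d (fun c => Rmin (proj1_sig (Hd c)) (Rmin (eta / 2) eps)) (fun _ => 1))
    as [del [Hdel Hc]]; auto.
  { split; auto. }
  { intros x. destruct (proj2_sig (Hd x)). repeat apply Rmin_glb_lt; lra. }
  { intros; lra. }
  exists (Rmin del eps); split; [apply Rmin_glb_lt; auto|split; [apply Rmin_r|]].
  intros a b Hab. assert (Hab' : d a b < del) by (eapply Rlt_le_trans; [apply Hab|apply Rmin_l]).
  destruct (Hc a) as [c [H1 [H2 _]]].
  destruct (proj2_sig (Hd c)) as [Hdc Hdc2].
  set (dc := proj1_sig (Hd c)) in *.
  assert (R1 := Rmin_l dc (Rmin (eta / 2) eps)).
  assert (R2 := Rmin_l (eta / 2) eps). assert (R3 := Rmin_r (eta / 2) eps).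
  assert (R4 := Rmin_r dc (Rmin (eta / 2) eps)).
  set (rc := Rmin dc (Rmin (eta / 2) eps)) in *.
  assert (Hcb : d c b < rc) by (specialize (Htri c a b); lra).
  assert (Hk : d (br c c) (br a b) < eta / 2) by (apply Hdc2; lra).
  rewrite Hbrxx in Hk.
  split.
  - specialize (Htri a c (br a b)). rewrite (Hdsym a c) in Htri. lra.
  - specialize (Htri (br a b) c b). rewrite (Hdsym (br a b) c) in Htri. lra.
Qed.

Lemma lemA {X : Type} (d : X -> X -> R) phi phiinv br eps lam gam eta :
  is_smale_space d phi phiinv br eps lam -> eta < eps -> gam <= eps ->
  (forall a b, d a b < gam -> d a (br a b) < eta /\ d (br a b) b < eta) ->
  forall K a b, (forall i, (i <= K)%nat -> d (Nat.iter i phi a) (Nat.iter i phi b) < gam) ->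
  d (Nat.iter K phi a) (br (Nat.iter K phi a) (Nat.iter K phi b)) <= lam ^ K * eta.
Proof.
  intros H Hee Hge Hub. pose proof H as H0. unpack H. intros K a b Hi.
  induction K as [|K IH].
  - simpl. destruct (Hub a b (Hi 0%nat (Nat.le_refl 0))). lra.
  - assert (IH' := IH (fun i Hi' => Hi i (le_S _ _ Hi'))).
    assert (Hxy := Hi K (le_S _ _ (Nat.le_refl K))). assert (Hxy1 := Hi (S K) (Nat.le_refl _)).
    simpl in Hxy1 |- *.
    set (x := Nat.iter K phi a) in *. set (y := Nat.iter K phi b) in *.
    destruct (Hub x y Hxy) as [Hz1 Hz2].
    assert (Hxz : br x (br x y) = br x y) by (apply Hax1; lra).
    assert (Hc := Hst x (br x y) ltac:(lra) Hxz).
    rewrite <- Heqv by lra.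
    apply Rle_trans with (lam * d x (br x y)); auto.
    rewrite Rmult_assoc. apply Rmult_le_compat_l; lra.
Qed.

Lemma lemB {X : Type} (d : X -> X -> R) phi phiinv br eps lam gam eta :
  is_smale_space d phi phiinv br eps lam -> eta < eps -> gam <= eps ->
  (forall a b, d a b < gam -> d a (br a b) < eta /\ d (br a b) b < eta) ->
  forall K a b, (forall i, (i <= K)%nat -> d (Nat.iter i phi a) (Nat.iter i phi b) < gam) ->
  d (br a b) b <= lam ^ K * eta.
Proof.
  intros H Hee Hge Hub. pose proof H as H0. unpack H. intros K.
  induction K as [|K IH]; intros a b Hi.
  - simpl. destruct (Hub a b (Hi 0%nat (Nat.le_refl 0))). lra.
  - assert (IH' := IH (phi a) (phi b)).
    assert (Hab := Hi 0%nat (Nat.le_0_l _)). assert (Hab1 := Hi 1%nat ltac:(lia)). simpl in Hab, Hab1.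
    assert (IH2 : d (br (phi a) (phi b)) (phi b) <= lam ^ K * eta).
    { apply IH'. intros i Hi'. rewrite !Nat.iter_swap. apply (Hi (S i)). lia. }
    destruct (Hub (phi a) (phi b) Hab1) as [Hz1 Hz2].
    assert (Hu : br (br (phi a) (phi b)) (phi b) = br (phi a) (phi b)) by (apply Hax2; lra).
    assert (Hc := Hun (br (phi a) (phi b)) (phi b) ltac:(lra) Hu).
    rewrite <- Heqv in Hc by lra. rewrite !Hpsi in Hc.
    simpl. apply Rle_trans with (lam * d (phi (br a b)) (phi b)); auto.
    rewrite Heqv by lra.
    apply Rle_trans with (lam * (lam ^ K * eta)); [apply Rmult_le_compat_l; lra | simpl; right; ring].
Qed.

Lemma lemQE {X : Type} (d : X -> X -> R) phi phiinv br eps lam gam eta :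
  is_smale_space d phi phiinv br eps lam -> eta < eps -> gam <= eps ->
  (forall a b, d a b < gam -> d a (br a b) < eta /\ d (br a b) b < eta) ->
  forall K a b, (forall i, (i <= K + K)%nat -> d (Nat.iter i phi a) (Nat.iter i phi b) < gam) ->
  d (Nat.iter K phi a) (Nat.iter K phi b) <= 2 * lam ^ K * eta.
Proof.
  intros H Hee Hge Hub K a b Hi. pose proof H as H0. unpack H0.
  assert (HA := lemA d phi phiinv br eps lam gam eta H Hee Hge Hub K a b ltac:(intros i Hi'; apply Hi; lia)).
  assert (HB := lemB d phi phiinv br eps lam gam eta H Hee Hge Hub K (Nat.iter K phi a) (Nat.iter K phi b)).
  assert (HB' : d (br (Nat.iter K phi a) (Nat.iter K phi b)) (Nat.iter K phi b) <= lam ^ K * eta).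
  { apply HB. intros i Hi'. rewrite <- !Nat.iter_add. apply Hi. lia. }
  specialize (Htri (Nat.iter K phi a) (br (Nat.iter K phi a) (Nat.iter K phi b)) (Nat.iter K phi b)). lra.
Qed.

Fixpoint yseq {X : Type} (br : X -> X -> X) (f : X -> X) (y : X) (k : nat) : X :=
  match k with 0%nat => y | S k => br y (f (yseq br f y k)) end.

Lemma iter_comm {X : Type} (f : X -> X) a b x : Nat.iter a f (Nat.iter b f x) = Nat.iter b f (Nat.iter a f x).
Proof. rewrite <- !Nat.iter_add. now rewrite Nat.add_comm. Qed.

Lemma pow_small (lam : R) : 0 < lam < 1 -> forall e, 0 < e -> exists N, forall n, (N <= n)%nat -> lam ^ n < e.
Proof.
  intros Hl e He. destruct (pow_lt_1_zero lam ltac:(rewrite Rabs_pos_eq; lra) e He) as [N HN].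
  exists N. intros n Hn. specialize (HN n Hn). rewrite Rabs_pos_eq in HN; auto. apply pow_le; lra.
Qed.

Lemma periodic_point_exists {X : Type} (d : X -> X -> R) phi phiinv br eps lam :
  is_smale_space d phi phiinv br eps lam -> exists p m, (1 <= m)%nat /\ Nat.iter m phi p = p.
Proof.
  intros H. pose proof H as H0. unpack H0.
  destruct (unif_bracket d phi phiinv br eps lam H (eps / 2) ltac:(lra)) as [gam1 [Hg1 [Hg1e Hub1]]].
  set (alpha := gam1 / 7).
  assert (Ha : 0 < alpha) by (unfold alpha; lra).
  destruct (unif_bracket d phi phiinv br eps lam H alpha Ha) as [gam2 [Hg2 [Hg2e Hub2]]].
  set (r := Rmin gam2 alpha).
  assert (Hr : 0 < r) by (apply Rmin_glb_lt; auto).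
  assert (Hra : r <= alpha) by apply Rmin_r.
  assert (Hrg : r <= gam2) by apply Rmin_l.
  destruct (pow_small lam ltac:(lra) (r / (2 * alpha))) as [N0 HN0].
  { apply Rdiv_lt_0_compat; lra. }
  set (M := S N0).
  assert (HM : lam ^ M * alpha < r / 2).
  { specialize (HN0 M ltac:(unfold M; lia)).
    apply Rmult_lt_compat_r with (r := alpha) in HN0; auto.
    replace (r / (2 * alpha) * alpha) with (r / 2) in HN0 by (field; lra). lra. }
  destruct (Hinf nil) as [x0 _].
  destruct (pigeonhole d (fun c z => d c z < r / 4) (fun k => Nat.iter (M * k) phi x0) Hcpt)
    as [i [j [c [Hij [Hci Hcj]]]]].
  { intros c z Hz. exists (r / 4 - d c z); split; [lra|]. intros z' Hz'. specialize (Htri c z z'). lra. }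
  { intros c. assert (d c c = 0) by (apply Hdz; auto). lra. }
  set (y := Nat.iter (M * i) phi x0) in *.
  set (m := (M * (j - i))%nat).
  assert (Hm1 : (M <= m)%nat) by (unfold m; nia).
  assert (Hym : Nat.iter m phi y = Nat.iter (M * j) phi x0).
  { unfold y, m. rewrite <- Nat.iter_add. f_equal. nia. }
  assert (Hrec : d y (Nat.iter m phi y) < r / 2).
  { rewrite Hym. specialize (Htri y c (Nat.iter (M * j) phi x0)). rewrite (Hdsym y c) in Htri. lra. }
  clearbody y m. clear Hym Hci Hcj Hij i j c.
  assert (Hlm : lam ^ m * alpha < r / 2).
  { apply Rle_lt_trans with (lam ^ M * alpha); auto. apply Rmult_le_compat_r; [lra|]. apply pow_decr; auto; lra. }
  assert (Hlm0 : 0 <= lam ^ m) by (apply pow_le; lra).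
  set (f := Nat.iter m phi).
  set (ys := yseq br f y).
  assert (Hae : alpha < eps) by (unfold alpha; lra).
  assert (H7a : 7 * alpha = gam1) by (unfold alpha; field).
  assert (Step : forall k, br y (ys k) = ys k -> d y (ys k) < alpha -> d y (f (ys k)) < gam2).
  { intros k H1 H2. destruct (stab_pow d phi phiinv br eps lam H m y (ys k) H1 ltac:(lra)) as [_ H3].
    fold f in H3. specialize (Htri y (f y) (f (ys k))).
    assert (lam ^ m * d y (ys k) <= lam ^ m * alpha) by (apply Rmult_le_compat_l; lra).
    unfold f in *. lra. }
  assert (Inv1 : forall k, br y (ys k) = ys k /\ d y (ys k) < alpha).
  { intros k; induction k as [|k [IH1 IH2]].
    - change (ys 0%nat) with y. split; auto. assert (d y y = 0) by (apply Hdz; auto). lra.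
    - assert (Hs := Step k IH1 IH2). change (ys (S k)) with (br y (f (ys k))).
      destruct (Hub2 y (f (ys k)) Hs) as [H1 H2]. split; [apply Hax1|]; lra. }
  assert (Inv2 : forall k, br (ys (S k)) (f (ys k)) = ys (S k) /\ d (ys (S k)) (f (ys k)) < alpha).
  { intros k. destruct (Inv1 k) as [IH1 IH2].
    assert (Hs := Step k IH1 IH2). change (ys (S k)) with (br y (f (ys k))).
    destruct (Hub2 y (f (ys k)) Hs) as [H1 H2]. split; [apply Hax2|]; lra. }
  set (v := fun N j => Nat.iter (m * j) phiinv (ys N)).
  assert (Link : forall N j, (S j <= N)%nat -> br (v N j) (ys (N - j)%nat) = v N j -> d (v N j) (ys (N - j)%nat) <= alpha ->
     br (v N j) (f (ys (N - S j)%nat)) = v N j /\ d (v N j) (f (ys (N - S j)%nat)) <= 2 * alpha).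
  { intros N j Hj H1 H2. replace (N - j)%nat with (S (N - S j)) in H1, H2 by lia.
    destruct (Inv2 (N - S j)%nat) as [H3 H4].
    assert (Hd2 : d (v N j) (f (ys (N - S j)%nat)) <= 2 * alpha).
    { specialize (Htri (v N j) (ys (S (N - S j))) (f (ys (N - S j)%nat))). lra. }
    split; auto. rewrite <- (Hax1 (v N j) (ys (S (N - S j))) (f (ys (N - S j)%nat))).
    - rewrite H3. exact H1.
    - lra.
    - rewrite H3. lra.
    - lra. }
  assert (Back : forall N j, (j <= N)%nat -> br (v N j) (ys (N - j)%nat) = v N j /\ d (v N j) (ys (N - j)%nat) <= alpha).
  { intros N j; induction j as [|j IH]; intros Hj.
    - rewrite Nat.sub_0_r. unfold v; rewrite Nat.mul_0_r; simpl. split; auto.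
      assert (d (ys N) (ys N) = 0) by (apply Hdz; auto). lra.
    - destruct (IH ltac:(lia)) as [H1 H2]. destruct (Link N j Hj H1 H2) as [H3 H4].
      destruct (unst_pow d phi phiinv br eps lam H m _ _ H3 ltac:(lra)) as [H5 H6].
      assert (E1 : Nat.iter m phiinv (v N j) = v N (S j)).
      { unfold v. rewrite <- Nat.iter_add. f_equal. lia. }
      assert (E2 : Nat.iter m phiinv (f (ys (N - S j)%nat)) = ys (N - S j)%nat).
      { unfold f. rewrite (iter_cancel phiinv phi Hpsi m m) by lia. now rewrite Nat.sub_diag. }
      rewrite E1, E2 in *. split; auto.
      apply Rle_trans with (lam ^ m * (2 * alpha)). apply Rle_trans with (lam ^ m * d (v N j) (f (ys (N - S j)%nat))); auto.
      apply Rmult_le_compat_l; auto. lra. }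
  assert (Hpow1 : forall t, lam ^ t <= 1) by (intros t; apply (pow_decr lam 0 t); [lra|lia]).
  assert (Orb : forall N k t, (k < N)%nat -> (t <= m)%nat ->
    d (Nat.iter (k * m + t) phi (v N N)) (Nat.iter t phi y) <= 3 * alpha).
  { intros N k t Hk Ht.
    set (j := (N - S k)%nat).
    assert (E : Nat.iter (k * m + t) phi (v N N) = Nat.iter (m - t) phiinv (v N j)).
    { unfold v. rewrite (iter_cancel phi phiinv Hphipsi) by nia. rewrite <- Nat.iter_add. f_equal.
      unfold j. nia. }
    rewrite E.
    destruct (Back N j ltac:(unfold j; lia)) as [H1 H2].
    destruct (Link N j ltac:(unfold j; lia) H1 H2) as [H3 H4].
    replace (N - S j)%nat with k in H3, H4 by (unfold j; lia).
    destruct (unst_pow d phi phiinv br eps lam H (m - t) _ _ H3 ltac:(lra)) as [_ H6].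
    assert (E2 : Nat.iter (m - t) phiinv (f (ys k)) = Nat.iter t phi (ys k)).
    { unfold f. rewrite (iter_cancel phiinv phi Hpsi) by lia. f_equal. lia. }
    rewrite E2 in H6.
    destruct (Inv1 k) as [H7 H8].
    destruct (stab_pow d phi phiinv br eps lam H t y (ys k) H7 ltac:(lra)) as [_ H9].
    assert (A1 : lam ^ (m - t) * d (v N j) (f (ys k)) <= 2 * alpha).
    { apply Rle_trans with (1 * (2 * alpha)); [|lra].
      apply Rmult_le_compat; try (apply pow_le; lra); try apply Hdpos; auto. }
    assert (A2 : lam ^ t * d y (ys k) <= alpha).
    { apply Rle_trans with (1 * alpha); [|lra].
      apply Rmult_le_compat; try (apply pow_le; lra); try apply Hdpos; auto; lra. }
    specialize (Htri (Nat.iter (m - t) phiinv (v N j)) (Nat.iter t phi (ys k)) (Nat.iter t phi y)).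
    rewrite (Hdsym (Nat.iter t phi (ys k)) (Nat.iter t phi y)) in Htri. lra. }
  assert (Appr : forall K, d (Nat.iter K phi (v (K+K+2)%nat (K+K+2)%nat))
      (f (Nat.iter K phi (v (K+K+2)%nat (K+K+2)%nat))) <= 2 * lam ^ K * (eps / 2)).
  { intros K. set (N := (K + K + 2)%nat). set (o := v N N).
    unfold f. rewrite iter_comm.
    apply (lemQE d phi phiinv br eps lam gam1 (eps / 2) H ltac:(lra) Hg1e Hub1).
    intros i Hi. rewrite <- Nat.iter_add.
    assert (Hdm := Nat.div_mod_eq i m). assert (Hmb := Nat.mod_upper_bound i m ltac:(lia)).
    set (q := (i / m)%nat) in *. set (t := (i mod m)%nat) in *.
    assert (Hq : (q <= i)%nat) by (unfold q; apply Nat.Div0.div_le_upper_bound; nia).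
    assert (O1 := Orb N q t ltac:(unfold N; lia) ltac:(lia)).
    assert (O2 := Orb N (S q) t ltac:(unfold N; lia) ltac:(lia)).
    replace (q * m + t)%nat with i in O1 by nia.
    replace (S q * m + t)%nat with (i + m)%nat in O2 by nia.
    fold o in O1, O2.
    specialize (Htri (Nat.iter i phi o) (Nat.iter t phi y) (Nat.iter (i + m) phi o)).
    rewrite (Hdsym (Nat.iter t phi y)) in Htri. lra. }
  destruct (zero_lemma d (fun x => d x (f x)) (conj Hdpos (conj Hdz (conj Hdsym Htri))) Hcpt) as [p Hp].
  - intros x; apply Hdpos.
  - intros x Hx. destruct (iter_cont d phi Hcphi m x (d x (f x) / 4) ltac:(lra)) as [del [Hdel Hc]].
    exists (Rmin del (d x (f x) / 4)); split; [apply Rmin_glb_lt; lra|].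
    intros z Hz. assert (Hz1 : d x z < del) by (eapply Rlt_le_trans; [apply Hz|apply Rmin_l]).
    assert (Hz2 : d x z < d x (f x) / 4) by (eapply Rlt_le_trans; [apply Hz|apply Rmin_r]).
    specialize (Hc z Hz1). fold f in Hc.
    assert (T1 := Htri x z (f x)). assert (T2 := Htri z (f z) (f x)).
    rewrite (Hdsym (f z) (f x)) in T2. lra.
  - intros e He. destruct (pow_small lam ltac:(lra) (e / (eps + 1))) as [K HK].
    { apply Rdiv_lt_0_compat; lra. }
    exists (Nat.iter K phi (v (K+K+2)%nat (K+K+2)%nat)).
    specialize (HK K (Nat.le_refl K)). specialize (Appr K).
    apply Rmult_lt_compat_r with (r := eps + 1) in HK; [|lra].
    replace (e / (eps + 1) * (eps + 1)) with e in HK by (field; lra).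
    assert (lam ^ K * eps <= lam ^ K * (eps + 1)) by (apply Rmult_le_compat_l; [apply pow_le; lra|lra]).
    lra.
  - exists p, m. split; [unfold M in Hm1; lia|]. apply Hdz in Hp. fold f. now rewrite <- Hp.
Qed.

Lemma fin_min (P : nat -> R -> Prop) (n : nat) :
  (forall j r r', 0 < r' <= r -> P j r -> P j r') ->
  (forall j, (j < n)%nat -> exists r, 0 < r /\ P j r) ->
  exists r, 0 < r /\ forall j, (j < n)%nat -> P j r.
Proof.
  intros Hmono; induction n as [|n IH]; intros Hj.
  - exists 1; split; [lra|]; intros; lia.
  - destruct IH as [r1 [Hr1 H1]]; [intros j Hj'; apply Hj; lia|].
    destruct (Hj n ltac:(lia)) as [r2 [Hr2 H2]].
    exists (Rmin r1 r2); split; [apply Rmin_glb_lt; auto|].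
    intros j Hj'. destruct (Nat.eq_dec j n) as [->|Hne].
    + apply (Hmono n r2); auto. split; [apply Rmin_glb_lt; auto|apply Rmin_r].
    + apply (Hmono j r1); [split; [apply Rmin_glb_lt; auto|apply Rmin_l]|]. apply H1; lia.
Qed.

Lemma iter_periodic {X : Type} (f : X -> X) (m : nat) (x : X) :
  Nat.iter m f x = x -> forall n, Nat.iter (m * n) f x = x.
Proof.
  intros Hx n; induction n as [|n IH].
  - now rewrite Nat.mul_0_r.
  - replace (m * S n)%nat with (m + m * n)%nat by lia. now rewrite Nat.iter_add, IH.
Qed.

Lemma iter_mod {X : Type} (f : X -> X) (m : nat) (x : X) :
  (1 <= m)%nat -> Nat.iter m f x = x -> forall i, Nat.iter i f x = Nat.iter (i mod m) f x.
Proof.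
  intros Hm Hx i. transitivity (Nat.iter (i mod m + m * (i / m)) f x).
  - f_equal. pose proof (Nat.div_mod_eq i m). lia.
  - rewrite Nat.iter_add. now rewrite iter_periodic.
Qed.

Lemma gpow_add {G : Type} (mul : G -> G -> G) (inv : G -> G) (e : G) g :
  is_group mul inv e -> forall a b, gpow mul e g (a + b) = mul (gpow mul e g a) (gpow mul e g b).
Proof.
  intros (Hass & Hl & Hr & Hli & Hri) a b. induction a as [|a IH]; simpl.
  - now rewrite Hl.
  - now rewrite IH, Hass.
Qed.

Theorem proposition2p6
  (G : Type) (mul : G -> G -> G) (inv : G -> G) (e : G)
  (X : Type) (d : X -> X -> R) (phi phiinv : X -> X) (br : X -> X -> X)
  (eps lam : R) (act : G -> X -> X) :
  is_group mul inv e ->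
  (exists g : G, infinite_order mul e g) ->
  is_smale_space d phi phiinv br eps lam ->
  is_smale_action mul e d phi act ->
  ~ free_action e act.
Proof.
  intros HG [g Hg] H Hact Hfree.
  pose proof HG as (Hass & Hl & Hr & Hli & Hri).
  destruct Hact as (Hac & Hae & Ham & Hacomm).
  destruct (periodic_point_exists d phi phiinv br eps lam H) as [p [m [Hm1 Hp]]].
  pose proof H as H0. unpack H0.
  assert (Hcomm : forall u k x, act u (Nat.iter k phi x) = Nat.iter k phi (act u x)).
  { intros u k; induction k as [|k IH]; intros x; simpl; auto. now rewrite Hacomm, IH. }
  set (q := fun k => act (gpow mul e g k) p).
  assert (Hqp : forall k, Nat.iter m phi (q k) = q k).
  { intros k. unfold q. now rewrite <- Hcomm, Hp. }
  destruct (unif_bracket d phi phiinv br eps lam H (eps / 2) ltac:(lra)) as [gam [Hg0 [Hge Hub]]].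
  destruct (pigeonhole d (fun c z => forall jj, (jj < m)%nat -> d (Nat.iter jj phi c) (Nat.iter jj phi z) < gam / 2) q Hcpt)
    as [a [b [c [Hab [Hca Hcb]]]]].
  { intros c z Hz.
    destruct (fin_min (fun jj r => forall z', d z z' < r -> d (Nat.iter jj phi c) (Nat.iter jj phi z') < gam / 2) m) as [r [Hr0 Hrr]].
    - intros jj r r' Hr' HP z' Hz'. apply HP. lra.
    - intros jj Hjj. specialize (Hz jj Hjj).
      destruct (iter_cont d phi Hcphi jj z (gam / 2 - d (Nat.iter jj phi c) (Nat.iter jj phi z)) ltac:(lra))
        as [del [Hdel Hc]].
      exists del; split; auto. intros z' Hz'. specialize (Hc z' Hz').
      specialize (Htri (Nat.iter jj phi c) (Nat.iter jj phi z) (Nat.iter jj phi z')). lra.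
    - exists r; split; auto. }
  { intros c jj _. assert (d (Nat.iter jj phi c) (Nat.iter jj phi c) = 0) by (apply Hdz; auto). lra. }
  assert (Hclose : forall i, d (Nat.iter i phi (q a)) (Nat.iter i phi (q b)) < gam).
  { intros i. rewrite (iter_mod phi m (q a) Hm1 (Hqp a)), (iter_mod phi m (q b) Hm1 (Hqp b)).
    assert (Hi : (i mod m < m)%nat) by (apply Nat.mod_upper_bound; lia).
    specialize (Hca _ Hi). specialize (Hcb _ Hi).
    specialize (Htri (Nat.iter (i mod m) phi (q a)) (Nat.iter (i mod m) phi c) (Nat.iter (i mod m) phi (q b))).
    rewrite (Hdsym _ (Nat.iter (i mod m) phi c)) in Htri. lra. }
  assert (Hbound : forall K, d (q a) (q b) <= 2 * lam ^ (m * K) * (eps / 2)).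
  { intros K. rewrite <- (iter_periodic phi m (q a) (Hqp a) K), <- (iter_periodic phi m (q b) (Hqp b) K).
    apply (lemQE d phi phiinv br eps lam gam (eps / 2) H ltac:(lra) Hge Hub). intros; apply Hclose. }
  assert (Heq : q a = q b).
  { apply Hdz. destruct (Hdpos (q a) (q b)) as [Hpos|]; auto. exfalso.
    destruct (pow_small lam ltac:(lra) (d (q a) (q b) / (eps + 1))) as [K HK].
    { apply Rdiv_lt_0_compat; lra. }
    specialize (HK (m * K)%nat ltac:(nia)). specialize (Hbound K).
    apply Rmult_lt_compat_r with (r := eps + 1) in HK; [|lra].
    replace (d (q a) (q b) / (eps + 1) * (eps + 1)) with (d (q a) (q b)) in HK by (field; lra).
    assert (lam ^ (m * K) * eps <= lam ^ (m * K) * (eps + 1)) by (apply Rmult_le_compat_l; [apply pow_le; lra|lra]).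
    lra. }
  unfold q in Heq.
  replace b with (a + (b - a))%nat in Heq by lia.
  rewrite (gpow_add mul inv e g HG), Ham in Heq.
  assert (Hinv : forall u x, act (inv u) (act u x) = x).
  { intros u x. now rewrite <- Ham, Hli, Hae. }
  apply (f_equal (act (inv (gpow mul e g a)))) in Heq. rewrite !Hinv in Heq.
  apply (Hg (b - a)%nat ltac:(lia)). apply (Hfree p). now rewrite <- Heq.
Qed.
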